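(* Let $X$, $Z$ be topological vector spaces and $C\subseteq Z$ a nonempty closed convex cone with $C^-\neq\{0\}$. Assume that there exist a bounded set $B\subseteq Z$ and a neighborhood $V$ of $0$ in $Z$ with $V\subseteq B-C$. If $f:X\to\mathcal{F}(Z,C)$ is lower continuous at $x_0\in{\rm dom\,} f$, then $f$ is efficient at $x_0$.
   Context: $\mathcal{F}(Z,C)=\{A\subseteq Z\colon A=\operatorname{cl}(A+C)\}$ (empty set included); $C^-=\{z^*\in Z^*\colon z^*(z)\le0\ \forall z\in C\}$; ${\rm dom\,} f=\{x\colon f(x)\neq\emptyset\}$. A set is bounded if it is absorbed by every neighborhood of $0$. $f$ is lower continuous at $x_0$ iff for every $z_0\in f(x_0)$ and every neighborhood $V$ of $z_0$ there is a neighborhood $U$ of $x_0$ with $f(x)\cap V\neq\emptyset$ for all $x\in U$. $f$ is efficient at $x_0$ iff there exist a neighborhood $U$ of $x_0$ and a bounded set $B'\subseteq Z$ with $f(x)\cap B'\neq\emptyset$ for all $x\in U$. *)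

(* Defs.v *)
From HB Require Import structures.
From mathcomp Require Import all_boot all_order all_algebra.
From mathcomp Require Import all_classical all_reals all_analysis.
Set Implicit Arguments. Unset Strict Implicit. Unset Printing Implicit Defensive.
Import Order.TTheory GRing.Theory Num.Theory.
Local Open Scope classical_set_scope.
Local Open Scope ring_scope.

Section Defs.
Variable R : realType.

Definition set_add (Z : lmodType R) (A C : set Z) : set Z :=
  [set a + c | a in A & c in C].
Definition set_sub (Z : lmodType R) (A C : set Z) : set Z :=
  [set a - c | a in A & c in C].

Definition is_convex_set (Z : lmodType R) (C : set Z) : Prop :=
  forall x y t, C x -> C y -> 0 <= t -> t <= 1 -> C (t *: x + (1 - t) *: y).
Definition is_cone (Z : lmodType R) (C : set Z) : Prop :=
  forall t z, 0 <= t -> C z -> C (t *: z).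

Definition is_cont_linear_functional (Z : topologicalLmodType R) (g : Z -> R) : Prop :=
  (forall (a : R) (x y : Z), g (a *: x + y) = a * g x + g y) /\ continuous (g : Z -> R^o).

Definition polar_cone (Z : topologicalLmodType R) (C : set Z) : set (Z -> R) :=
  [set g | is_cont_linear_functional g /\ forall z, C z -> g z <= 0].

Definition tvs_bounded (Z : topologicalLmodType R) (B : set Z) : Prop :=
  forall U : set Z, nbhs (0 : Z) U ->
    exists s : R, 0 < s /\ forall t : R, s < t -> B `<=` [set t *: u | u in U].

Definition in_FZC (Z : topologicalLmodType R) (C : set Z) (A : set Z) : Prop :=
  A = closure (set_add A C).

Definition lower_continuous_at (X Z : topologicalLmodType R)
  (f : X -> set Z) (x0 : X) : Prop :=
  forall z0, f x0 z0 -> forall W : set Z, nbhs z0 W ->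
    exists U : set X, nbhs x0 U /\ forall x, U x -> f x `&` W !=set0.

Definition efficient_at (X Z : topologicalLmodType R)
  (f : X -> set Z) (x0 : X) : Prop :=
  exists U : set X, exists B' : set Z,
    nbhs x0 U /\ tvs_bounded B' /\ forall x, U x -> f x `&` B' !=set0.

End Defs.

(* Main.v *)
Require Import Defs.
From HB Require Import structures.
From mathcomp Require Import all_boot all_order all_algebra.
From mathcomp Require Import all_classical all_reals all_analysis.
Import Order.TTheory GRing.Theory Num.Theory.
Local Open Scope classical_set_scope.
Local Open Scope ring_scope.
Section S.
Variables (R : realType) (Z : topologicalLmodType R).
Lemma addnb (U : set Z) : nbhs (0:Z) U -> exists U1 U2 : set Z, nbhs (0:Z) U1 /\ nbhs (0:Z) U2 /\
  forall a b, U1 a -> U2 b -> U (a + b).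
Proof.
move=> hU.
have := @add_continuous Z (0, 0) U. rewrite /= addr0 => /(_ hU).
case=> [[A B] /= [nA nB] sAB]. exists A, B; split=> //; split=> // a b Aa Bb.
exact: (sAB (a, b)).
Qed.
Lemma scalenb (U : set Z) (z : Z) : nbhs (0:Z) U -> exists e : R, 0 < e /\
  forall r : R, `|r| < e -> U (r *: z).
Proof.
move=> hU.
have := @scale_continuous R Z (0, z) U. rewrite /= scale0r => /(_ hU).
case=> [[A B] /= [nA nB] sAB].
case/nbhs_ballP: nA => e e0 hA.
exists e; split=> // r hr.
apply: (sAB (r, z)); split=> //=; last exact: nbhs_singleton.
apply: hA. rewrite /ball /= sub0r normrN. exact: hr.
Qed.

Lemma transl_bounded (B : set Z) (z : Z) : tvs_bounded B ->
  tvs_bounded [set z + b | b in B].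
Proof.
move=> hB U hU.
have [U1 [U2 [n1 [n2 hU12]]]] := addnb _ hU.
have [e [e0 he]] := scalenb _ z n1.
have [s [s0 hs]] := hB U2 n2.
exists (Num.max s e^-1); split; first by rewrite lt_max s0.
move=> t; rewrite gt_max => /andP[st et] _ [b Bb <-].
have t0 : 0 < t by apply: lt_trans st.
have [u U2u bu] := hs t st b Bb.
exists (t^-1 *: z + u); last first.
  by rewrite scalerDr scalerA divff ?gt_eqF // scale1r bu.
apply: hU12 => //; apply: he.
rewrite gtr0_norm ?invr_gt0 //.
by rewrite -(invrK e) ltf_pV2 ?posrE ?invr_gt0.
Qed.
End S.

Theorem mainTheorem4 (R : realType) (X Z : topologicalLmodType R) (C : set Z)
  (f : X -> set Z) (x0 : X) :
  C !=set0 -> closed C -> is_convex_set C -> is_cone C ->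
  (exists g, polar_cone C g /\ g <> (fun _ => 0)) ->
  (exists (B : set Z) (V : set Z),
      tvs_bounded B /\ nbhs (0 : Z) V /\ V `<=` set_sub B C) ->
  (forall x, in_FZC C (f x)) ->
  f x0 !=set0 ->
  lower_continuous_at f x0 ->
  efficient_at f x0.
Proof.
move=> _ _ _ _ _ [B [V [hB [hV hVB]]]] hF [z0 fz0] hlc.
have hW : nbhs z0 [set w | V (w - z0)].
  have := @sub_continuous Z (z0, z0) V.
  rewrite /= subrr => /(_ hV).
  case=> [[A1 A2] /= [nA1 nA2] sA].
  apply: filterS nA1 => w A1w.
  exact: (sA (w, z0) (conj A1w (nbhs_singleton nA2))).
have [U [nU hU]] := hlc z0 fz0 _ hW.
exists U, [set z0 + b | b in B]; split=> //; split; first exact: transl_bounded.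
move=> x /hU [w [fxw /= Vw]].
have [b Bb [c Cc hbc]] := hVB _ Vw.
exists (w + c); split; last first.
  exists b => //. have -> : w = z0 + (b - c) by rewrite hbc addrC subrK.
  by rewrite -addrA subrK.
rewrite (hF x); apply: subset_closure.
by exists w => //; exists c.
Qed.
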